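(* For $n = 2^i$ with $i \ge 2$, let $W(V)$ be the word on an ordered $n$-element nail set $V$ defined below. Then $W(V)$ solves the $2$-out-of-$n$ picture-hanging puzzle on $V$, and its formal (unreduced) length is \[ \lambda(W(V)) = \tfrac{8}{3}\, n^{\log_2 6} - 4 n^2 = \tfrac{8}{3}\cdot 6^i - 4\cdot 4^i ; \] in particular the freely reduced length of this solution is at most $\tfrac{8}{3} n^{\log_2 6} - 4n^2$. Definitions: For an ordered nail set $U$ with $|U| = 2^t$, the balanced commutator tree $B(U)$ is the generator if $|U|=1$, and otherwise $B(U) = [B(U_1), B(U_2)]$ with $U_1$ the first half and $U_2$ the second half of $U$. For an ordered nail set $U$ of size $2^t$, $t \ge 1$: if $U = \{a,b\}$ (in this order) then $W(U) = a + b$; if $|U| \ge 4$, let $L$ be the first half and $R$ the second half of $U$, let $P = W(L)$, $Q = W(R)$, $C = B(L) + B(R)$, let $X$ be one of $P, Q, C$ of maximal formal length $\lambda$, let $Y, Z$ be the other two (in either order), and set $W(U) = [X, [Y, Z]]$.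
   Context: Words are elements of the free group on the nails, written additively ($+$ group operation, $-$ inverse, $0$ identity); $[a,b] = a + b - a - b$. The formal length $\lambda$ of an expression is its symbol count before any free reduction: $\lambda(\text{generator}) = 1$, $\lambda(x + y) = \lambda(x) + \lambda(y)$, $\lambda([x,y]) = 2\lambda(x) + 2\lambda(y)$. The (reduced) length of a word is the number of letters of its freely reduced form. For $S \subseteq V$, $w|_S$ is the image of $w$ under the homomorphism killing the generators in $S$. A solution to the $k$-out-of-$n$ picture-hanging puzzle on a set $V$ of $n$ nails is a word $w$ with $w|_S = 0 \iff |S| \ge k$ for all $S \subseteq V$ (equivalently for $k\ge1$: $w \ne 0$, removing any $k$ nails gives $0$, removing fewer leaves it nonzero). *)

(* Defs.v *)
From mathcomp Require Import all_boot all_order all_algebra.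
Set Implicit Arguments. Unset Strict Implicit. Unset Printing Implicit Defensive.

Section PictureHanging.
Variable T : eqType.

(* A letter: (nail, true) is the generator, (nail, false) its inverse. *)
Definition letter := (T * bool)%type.

(* Formal expressions built from generators with +, - and commutators.
   EZero (the identity 0) is only used as a dummy value in degenerate cases. *)
Inductive expr : Type :=
| EZero : expr
| EGen : T -> expr
| EAdd : expr -> expr -> expr
| ENeg : expr -> expr
| EComm : expr -> expr -> expr.

Fixpoint flen (e : expr) : nat :=
  match e with
  | EZero => 0
  | EGen _ => 1
  | EAdd x y => flen x + flen y
  | ENeg x => flen x
  | EComm x y => 2 * flen x + 2 * flen y
  end.

Definition inv_word (w : seq letter) : seq letter :=
  rev (map (fun l => (l.1, ~~ l.2)) w).

Fixpoint raw (e : expr) : seq letter :=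
  match e with
  | EZero => [::]
  | EGen a => [:: (a, true)]
  | EAdd x y => raw x ++ raw y
  | ENeg x => inv_word (raw x)
  | EComm x y => raw x ++ raw y ++ inv_word (raw x) ++ inv_word (raw y)
  end.

Definition push (x : letter) (r : seq letter) : seq letter :=
  match r with
  | y :: r' => if (y.1 == x.1) && (y.2 != x.2) then r' else x :: r
  | [::] => [:: x]
  end.

Definition reduce (w : seq letter) : seq letter := foldr push [::] w.

Definition rlen (e : expr) : nat := size (reduce (raw e)).

(* w|_S = 0 : image under the homomorphism killing the generators in S is trivial *)
Definition killed (S : seq T) (e : expr) : Prop :=
  reduce (filter (fun l : letter => l.1 \notin S) (raw e)) = [::].

Definition solves (k : nat) (V : seq T) (e : expr) : Prop :=
  forall S : seq T, uniq S -> {subset S <= V} -> (killed S e <-> k <= size S).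

Fixpoint Btree (t : nat) (U : seq T) : expr :=
  match t with
  | 0 => match U with a :: _ => EGen a | [::] => EZero end
  | t'.+1 => EComm (Btree t' (take (2 ^ t') U)) (Btree t' (drop (2 ^ t') U))
  end.

Inductive isW : nat -> seq T -> expr -> Prop :=
| isW_base (a b : T) : isW 1 [:: a; b] (EAdd (EGen a) (EGen b))
| isW_step (t : nat) (U : seq T) (P Q X Y Z : expr) :
    isW t.+1 (take (2 ^ t.+1) U) P ->
    isW t.+1 (drop (2 ^ t.+1) U) Q ->
    let C := EAdd (Btree t.+1 (take (2 ^ t.+1) U)) (Btree t.+1 (drop (2 ^ t.+1) U)) in
    ((X, Y, Z) = (P, Q, C) \/ (X, Y, Z) = (P, C, Q) \/ (X, Y, Z) = (Q, P, C) \/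
     (X, Y, Z) = (Q, C, P) \/ (X, Y, Z) = (C, P, Q) \/ (X, Y, Z) = (C, Q, P)) ->
    flen Y <= flen X -> flen Z <= flen X ->
    isW t.+2 U (EComm X (EComm Y Z)).

End PictureHanging.

(* Main.v *)
Require Import Defs.
From mathcomp Require Import all_boot all_order all_algebra.
From mathcomp Require Import zify lra.
Import GRing.Theory Num.Theory.
Local Open Scope ring_scope.
Local Open Scope nat_scope.
Set Implicit Arguments. Unset Strict Implicit. Unset Printing Implicit Defensive.

(* ---------- a concrete copy of A5 as a multiplication table ---------- *)
Definition MT : seq (seq nat) := [:: [:: 0; 1; 2; 3; 4; 5; 6; 7; 8; 9; 10; 11; 12; 13; 14; 15; 16; 17; 18; 19; 20; 21; 22; 23; 24; 25; 26; 27; 28; 29; 30; 31; 32; 33; 34; 35; 36; 37; 38; 39; 40; 41; 42; 43; 44; 45; 46; 47; 48; 49; 50; 51; 52; 53; 54; 55; 56; 57; 58; 59]; [:: 1; 2; 0; 6; 8; 7; 9; 11; 10; 3; 4; 5; 13; 14; 12; 18; 20; 19; 21; 23; 22; 15; 16; 17; 36; 38; 37; 39; 41; 40; 45; 46; 47; 42; 43; 44; 48; 50; 49; 51; 53; 52; 57; 58; 59; 54; 55; 56; 24; 25; 26; 27; 28; 29; 30; 31; 32; 33; 34; 35]; [:: 2; 0; 1; 9; 10; 11; 3; 5; 4; 6; 8; 7; 14; 12; 13; 21; 22; 23; 15; 17; 16; 18; 20; 19; 48; 49; 50; 51; 52; 53; 54; 55; 56; 57; 58; 59; 24; 26; 25;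 27; 29; 28; 33; 34; 35; 30; 31; 32; 36; 38; 37; 39; 41; 40; 45; 46; 47; 42; 43; 44]; [:: 3; 5; 4; 0; 2; 1; 10; 9; 11; 7; 6; 8; 24; 26; 25; 27; 29; 28; 33; 34; 35; 30; 31; 32; 12; 14; 13; 15; 17; 16; 21; 22; 23; 18; 19; 20; 49; 48; 50; 54; 55; 56; 51; 52; 53; 57; 59; 58; 37; 36; 38; 42; 43; 44; 39; 40; 41; 45; 47; 46]; [:: 4; 3; 5; 7; 6; 8; 0; 1; 2; 10; 11; 9; 25; 24; 26; 30; 31; 32; 27; 28; 29; 33; 35; 34; 37; 36; 38; 42; 43; 44; 39; 40; 41; 45; 47; 46; 12; 13; 14; 15; 16; 17; 18; 19; 20; 21; 22; 23; 49; 50; 48; 54; 56; 55; 57; 59; 58; 51; 52; 53]; [:: 5; 4; 3; 10; 11; 9; 7; 8; 6; 0; 2; 1; 26; 25; 24; 33; 35; 34; 30; 32; 31; 27; 29; 28; 49; 50; 48; 54; 56; 55; 57; 59; 58; 51; 52; 53; 37; 38; 36; 42; 44; 43; 45; 47; 46; 39; 40; 41; 12; 14; 13; 15; 17; 16; 21; 22; 23; 18; 19; 20]; [:: 6; 7; 8; 1; 0; 2; 4; 3; 5; 11; 9; 10; 36; 37; 38; 39; 40; 41; 42; 43; 44; 45; 46; 47; 13; 12; 14; 18; 19; 20; 15; 16; 17; 21; 23; 22; 25; 24; 26; 30; 31; 32; 27; 28; 29; 33; 35; 34; 50; 48; 49; 57; 58; 59; 51; 53; 52; 54; 56; 55]; [::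 7; 8; 6; 4; 5; 3; 11; 10; 9; 1; 0; 2; 37; 38; 36; 42; 44; 43; 45; 47; 46; 39; 40; 41; 25; 26; 24; 30; 32; 31; 33; 35; 34; 27; 28; 29; 50; 49; 48; 57; 59; 58; 54; 56; 55; 51; 53; 52; 13; 12; 14; 18; 19; 20; 15; 16; 17; 21; 23; 22]; [:: 8; 6; 7; 11; 9; 10; 1; 2; 0; 4; 5; 3; 38; 36; 37; 45; 46; 47; 39; 41; 40; 42; 44; 43; 50; 48; 49; 57; 58; 59; 51; 53; 52; 54; 56; 55; 13; 14; 12; 18; 20; 19; 21; 23; 22; 15; 16; 17; 25; 26; 24; 30; 32; 31; 33; 35; 34; 27; 28; 29]; [:: 9; 11; 10; 2; 1; 0; 8; 6; 7; 5; 3; 4; 48; 50; 49; 51; 53; 52; 57; 58; 59; 54; 55; 56; 14; 13; 12; 21; 23; 22; 18; 20; 19; 15; 17; 16; 38; 36; 37; 45; 46; 47; 39; 41; 40; 42; 44; 43; 26; 24; 25; 33; 34; 35; 27; 29; 28; 30; 32; 31]; [:: 10; 9; 11; 5; 3; 4; 2; 0; 1; 8; 7; 6; 49; 48; 50; 54; 55; 56; 51; 52; 53; 57; 59; 58; 26; 24; 25; 33; 34; 35; 27; 29; 28; 30; 32; 31; 14; 12; 13; 21; 22; 23; 15; 17; 16; 18; 20; 19; 38; 37; 36; 45; 47; 46; 42; 44; 43; 39; 41; 40]; [:: 11; 10; 9; 8; 7; 6; 5; 4; 3; 2; 1; 0; 50; 49; 48; 57; 59; 58; 54; 56; 55; 51;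 53; 52; 38; 37; 36; 45; 47; 46; 42; 44; 43; 39; 41; 40; 26; 25; 24; 33; 35; 34; 30; 32; 31; 27; 29; 28; 14; 13; 12; 21; 23; 22; 18; 20; 19; 15; 17; 16]; [:: 12; 14; 13; 15; 17; 16; 21; 22; 23; 18; 19; 20; 0; 2; 1; 3; 5; 4; 9; 10; 11; 6; 7; 8; 27; 29; 28; 24; 26; 25; 34; 33; 35; 31; 30; 32; 51; 52; 53; 48; 49; 50; 55; 54; 56; 58; 57; 59; 39; 40; 41; 36; 37; 38; 43; 42; 44; 46; 45; 47]; [:: 13; 12; 14; 18; 19; 20; 15; 16; 17; 21; 23; 22; 1; 0; 2; 6; 7; 8; 3; 4; 5; 9; 11; 10; 39; 40; 41; 36; 37; 38; 43; 42; 44; 46; 45; 47; 27; 28; 29; 24; 25; 26; 31; 30; 32; 34; 33; 35; 51; 53; 52; 48; 50; 49; 58; 57; 59; 55; 54; 56]; [:: 14; 13; 12; 21; 23; 22; 18; 20; 19; 15; 17; 16; 2; 1; 0; 9; 11; 10; 6; 8; 7; 3; 5; 4; 51; 53; 52; 48; 50; 49; 58; 57; 59; 55; 54; 56; 39; 41; 40; 36; 38; 37; 46; 45; 47; 43; 42; 44; 27; 29; 28; 24; 26; 25; 34; 33; 35; 31; 30; 32]; [:: 15; 16; 17; 12; 13; 14; 19; 18; 20; 22; 21; 23; 27; 28; 29; 24; 25; 26; 31; 30; 32; 34; 33; 35; 0; 1; 2; 3; 4; 5; 6; 7; 8; 9; 10; 11; 40; 39; 41; 43; 42; 44; 36; 37;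 38; 46; 47; 45; 52; 51; 53; 55; 54; 56; 48; 49; 50; 58; 59; 57]; [:: 16; 17; 15; 19; 20; 18; 22; 23; 21; 12; 13; 14; 28; 29; 27; 31; 32; 30; 34; 35; 33; 24; 25; 26; 40; 41; 39; 43; 44; 42; 46; 47; 45; 36; 37; 38; 52; 53; 51; 55; 56; 54; 58; 59; 57; 48; 49; 50; 0; 1; 2; 3; 4; 5; 6; 7; 8; 9; 10; 11]; [:: 17; 15; 16; 22; 21; 23; 12; 14; 13; 19; 20; 18; 29; 27; 28; 34; 33; 35; 24; 26; 25; 31; 32; 30; 52; 51; 53; 55; 54; 56; 48; 49; 50; 58; 59; 57; 0; 2; 1; 3; 5; 4; 9; 10; 11; 6; 7; 8; 40; 41; 39; 43; 44; 42; 46; 47; 45; 36; 37; 38]; [:: 18; 20; 19; 13; 14; 12; 23; 21; 22; 16; 15; 17; 39; 41; 40; 36; 38; 37; 46; 45; 47; 43; 42; 44; 1; 2; 0; 6; 8; 7; 9; 11; 10; 3; 4; 5; 53; 51; 52; 58; 57; 59; 48; 50; 49; 55; 56; 54; 28; 27; 29; 31; 30; 32; 24; 25; 26; 34; 35; 33]; [:: 19; 18; 20; 16; 15; 17; 13; 12; 14; 23; 22; 21; 40; 39; 41; 43; 42; 44; 36; 37; 38; 46; 47; 45; 28; 27; 29; 31; 30; 32; 24; 25; 26; 34; 35; 33; 1; 0; 2; 6; 7; 8; 3; 4; 5; 9; 11; 10; 53; 52; 51; 58; 59; 57; 55; 56; 54; 48; 50; 49]; [:: 20; 19; 18; 23;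 22; 21; 16; 17; 15; 13; 14; 12; 41; 40; 39; 46; 47; 45; 43; 44; 42; 36; 38; 37; 53; 52; 51; 58; 59; 57; 55; 56; 54; 48; 50; 49; 28; 29; 27; 31; 32; 30; 34; 35; 33; 24; 25; 26; 1; 2; 0; 6; 8; 7; 9; 11; 10; 3; 4; 5]; [:: 21; 22; 23; 14; 12; 13; 17; 15; 16; 20; 18; 19; 51; 52; 53; 48; 49; 50; 55; 54; 56; 58; 57; 59; 2; 0; 1; 9; 10; 11; 3; 5; 4; 6; 8; 7; 29; 27; 28; 34; 33; 35; 24; 26; 25; 31; 32; 30; 41; 39; 40; 46; 45; 47; 36; 38; 37; 43; 44; 42]; [:: 22; 23; 21; 17; 16; 15; 20; 19; 18; 14; 12; 13; 52; 53; 51; 55; 56; 54; 58; 59; 57; 48; 49; 50; 29; 28; 27; 34; 35; 33; 31; 32; 30; 24; 26; 25; 41; 40; 39; 46; 47; 45; 43; 44; 42; 36; 38; 37; 2; 0; 1; 9; 10; 11; 3; 5; 4; 6; 8; 7]; [:: 23; 21; 22; 20; 18; 19; 14; 13; 12; 17; 16; 15; 53; 51; 52; 58; 57; 59; 48; 50; 49; 55; 56; 54; 41; 39; 40; 46; 45; 47; 36; 38; 37; 43; 44; 42; 2; 1; 0; 9; 11; 10; 6; 8; 7; 3; 5; 4; 29; 28; 27; 34; 35; 33; 31; 32; 30; 24; 26; 25]; [:: 24; 25; 26; 27; 28; 29; 30; 31; 32; 33; 34; 35; 3; 4; 5; 0; 1; 2; 7; 6; 8; 10; 9; 11; 15; 16;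 17; 12; 13; 14; 19; 18; 20; 22; 21; 23; 42; 43; 44; 37; 36; 38; 40; 39; 41; 47; 45; 46; 54; 55; 56; 49; 48; 50; 52; 51; 53; 59; 57; 58]; [:: 25; 26; 24; 30; 32; 31; 33; 35; 34; 27; 28; 29; 4; 5; 3; 7; 8; 6; 10; 11; 9; 0; 1; 2; 42; 44; 43; 37; 38; 36; 47; 45; 46; 40; 39; 41; 54; 56; 55; 49; 50; 48; 59; 57; 58; 52; 51; 53; 15; 16; 17; 12; 13; 14; 19; 18; 20; 22; 21; 23]; [:: 26; 24; 25; 33; 34; 35; 27; 29; 28; 30; 32; 31; 5; 3; 4; 10; 9; 11; 0; 2; 1; 7; 8; 6; 54; 55; 56; 49; 48; 50; 52; 51; 53; 59; 57; 58; 15; 17; 16; 12; 14; 13; 22; 21; 23; 19; 18; 20; 42; 44; 43; 37; 38; 36; 47; 45; 46; 40; 39; 41]; [:: 27; 29; 28; 24; 26; 25; 34; 33; 35; 31; 30; 32; 15; 17; 16; 12; 14; 13; 22; 21; 23; 19; 18; 20; 3; 5; 4; 0; 2; 1; 10; 9; 11; 7; 6; 8; 55; 54; 56; 52; 51; 53; 49; 48; 50; 59; 58; 57; 43; 42; 44; 40; 39; 41; 37; 36; 38; 47; 46; 45]; [:: 28; 27; 29; 31; 30; 32; 24; 25; 26; 34; 35; 33; 16; 15; 17; 19; 18; 20; 12; 13; 14; 22; 23; 21; 43; 42; 44; 40; 39; 41; 37; 36; 38; 47; 46; 45; 3; 4; 5; 0; 1; 2; 7; 6; 8; 10; 9; 11;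 55; 56; 54; 52; 53; 51; 59; 58; 57; 49; 48; 50]; [:: 29; 28; 27; 34; 35; 33; 31; 32; 30; 24; 26; 25; 17; 16; 15; 22; 23; 21; 19; 20; 18; 12; 14; 13; 55; 56; 54; 52; 53; 51; 59; 58; 57; 49; 48; 50; 43; 44; 42; 40; 41; 39; 47; 46; 45; 37; 36; 38; 3; 5; 4; 0; 2; 1; 10; 9; 11; 7; 6; 8]; [:: 30; 31; 32; 25; 24; 26; 28; 27; 29; 35; 33; 34; 42; 43; 44; 37; 36; 38; 40; 39; 41; 47; 45; 46; 4; 3; 5; 7; 6; 8; 0; 1; 2; 10; 11; 9; 16; 15; 17; 19; 18; 20; 12; 13; 14; 22; 23; 21; 56; 54; 55; 59; 57; 58; 49; 50; 48; 52; 53; 51]; [:: 31; 32; 30; 28; 29; 27; 35; 34; 33; 25; 24; 26; 43; 44; 42; 40; 41; 39; 47; 46; 45; 37; 36; 38; 16; 17; 15; 19; 20; 18; 22; 23; 21; 12; 13; 14; 56; 55; 54; 59; 58; 57; 52; 53; 51; 49; 50; 48; 4; 3; 5; 7; 6; 8; 0; 1; 2; 10; 11; 9]; [:: 32; 30; 31; 35; 33; 34; 25; 26; 24; 28; 29; 27; 44; 42; 43; 47; 45; 46; 37; 38; 36; 40; 41; 39; 56; 54; 55; 59; 57; 58; 49; 50; 48; 52; 53; 51; 4; 5; 3; 7; 8; 6; 10; 11; 9; 0; 1; 2; 16; 17; 15; 19; 20; 18; 22; 23; 21; 12; 13; 14]; [:: 33; 35; 34; 26; 25; 24; 32; 30;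 31; 29; 27; 28; 54; 56; 55; 49; 50; 48; 59; 57; 58; 52; 51; 53; 5; 4; 3; 10; 11; 9; 7; 8; 6; 0; 2; 1; 44; 42; 43; 47; 45; 46; 37; 38; 36; 40; 41; 39; 17; 15; 16; 22; 21; 23; 12; 14; 13; 19; 20; 18]; [:: 34; 33; 35; 29; 27; 28; 26; 24; 25; 32; 31; 30; 55; 54; 56; 52; 51; 53; 49; 48; 50; 59; 58; 57; 17; 15; 16; 22; 21; 23; 12; 14; 13; 19; 20; 18; 5; 3; 4; 10; 9; 11; 0; 2; 1; 7; 8; 6; 44; 43; 42; 47; 46; 45; 40; 41; 39; 37; 38; 36]; [:: 35; 34; 33; 32; 31; 30; 29; 28; 27; 26; 25; 24; 56; 55; 54; 59; 58; 57; 52; 53; 51; 49; 50; 48; 44; 43; 42; 47; 46; 45; 40; 41; 39; 37; 38; 36; 17; 16; 15; 22; 23; 21; 19; 20; 18; 12; 14; 13; 5; 4; 3; 10; 11; 9; 7; 8; 6; 0; 2; 1]; [:: 36; 38; 37; 39; 41; 40; 45; 46; 47; 42; 43; 44; 6; 8; 7; 1; 2; 0; 11; 9; 10; 4; 3; 5; 18; 20; 19; 13; 14; 12; 23; 21; 22; 16; 15; 17; 57; 58; 59; 50; 48; 49; 53; 51; 52; 56; 54; 55; 30; 31; 32; 25; 24; 26; 28; 27; 29; 35; 33; 34]; [:: 37; 36; 38; 42; 43; 44; 39; 40; 41; 45; 47; 46; 7; 6; 8; 4; 3; 5; 1; 0; 2; 11; 10; 9; 30; 31; 32; 25; 24; 26;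 28; 27; 29; 35; 33; 34; 18; 19; 20; 13; 12; 14; 16; 15; 17; 23; 21; 22; 57; 59; 58; 50; 49; 48; 56; 54; 55; 53; 51; 52]; [:: 38; 37; 36; 45; 47; 46; 42; 44; 43; 39; 41; 40; 8; 7; 6; 11; 10; 9; 4; 5; 3; 1; 2; 0; 57; 59; 58; 50; 49; 48; 56; 54; 55; 53; 51; 52; 30; 32; 31; 25; 26; 24; 35; 33; 34; 28; 27; 29; 18; 20; 19; 13; 14; 12; 23; 21; 22; 16; 15; 17]; [:: 39; 40; 41; 36; 37; 38; 43; 42; 44; 46; 45; 47; 18; 19; 20; 13; 12; 14; 16; 15; 17; 23; 21; 22; 6; 7; 8; 1; 0; 2; 4; 3; 5; 11; 9; 10; 31; 30; 32; 28; 27; 29; 25; 24; 26; 35; 34; 33; 58; 57; 59; 53; 51; 52; 50; 48; 49; 56; 55; 54]; [:: 40; 41; 39; 43; 44; 42; 46; 47; 45; 36; 37; 38; 19; 20; 18; 16; 17; 15; 23; 22; 21; 13; 12; 14; 31; 32; 30; 28; 29; 27; 35; 34; 33; 25; 24; 26; 58; 59; 57; 53; 52; 51; 56; 55; 54; 50; 48; 49; 6; 7; 8; 1; 0; 2; 4; 3; 5; 11; 9; 10]; [:: 41; 39; 40; 46; 45; 47; 36; 38; 37; 43; 44; 42; 20; 18; 19; 23; 21; 22; 13; 14; 12; 16; 17; 15; 58; 57; 59; 53; 51; 52; 50; 48; 49; 56; 55; 54; 6; 8; 7; 1; 2; 0; 11; 9; 10; 4; 3; 5; 31; 32; 30; 28;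 29; 27; 35; 34; 33; 25; 24; 26]; [:: 42; 44; 43; 37; 38; 36; 47; 45; 46; 40; 39; 41; 30; 32; 31; 25; 26; 24; 35; 33; 34; 28; 27; 29; 7; 8; 6; 4; 5; 3; 11; 10; 9; 1; 0; 2; 59; 57; 58; 56; 54; 55; 50; 49; 48; 53; 52; 51; 19; 18; 20; 16; 15; 17; 13; 12; 14; 23; 22; 21]; [:: 43; 42; 44; 40; 39; 41; 37; 36; 38; 47; 46; 45; 31; 30; 32; 28; 27; 29; 25; 24; 26; 35; 34; 33; 19; 18; 20; 16; 15; 17; 13; 12; 14; 23; 22; 21; 7; 6; 8; 4; 3; 5; 1; 0; 2; 11; 10; 9; 59; 58; 57; 56; 55; 54; 53; 52; 51; 50; 49; 48]; [:: 44; 43; 42; 47; 46; 45; 40; 41; 39; 37; 38; 36; 32; 31; 30; 35; 34; 33; 28; 29; 27; 25; 26; 24; 59; 58; 57; 56; 55; 54; 53; 52; 51; 50; 49; 48; 19; 20; 18; 16; 17; 15; 23; 22; 21; 13; 12; 14; 7; 8; 6; 4; 5; 3; 11; 10; 9; 1; 0; 2]; [:: 45; 46; 47; 38; 36; 37; 41; 39; 40; 44; 42; 43; 57; 58; 59; 50; 48; 49; 53; 51; 52; 56; 54; 55; 8; 6; 7; 11; 9; 10; 1; 2; 0; 4; 5; 3; 20; 18; 19; 23; 21; 22; 13; 14; 12; 16; 17; 15; 32; 30; 31; 35; 33; 34; 25; 26; 24; 28; 29; 27]; [:: 46; 47; 45; 41; 40; 39; 44; 43; 42; 38; 36; 37;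 58; 59; 57; 53; 52; 51; 56; 55; 54; 50; 48; 49; 20; 19; 18; 23; 22; 21; 16; 17; 15; 13; 14; 12; 32; 31; 30; 35; 34; 33; 28; 29; 27; 25; 26; 24; 8; 6; 7; 11; 9; 10; 1; 2; 0; 4; 5; 3]; [:: 47; 45; 46; 44; 42; 43; 38; 37; 36; 41; 40; 39; 59; 57; 58; 56; 54; 55; 50; 49; 48; 53; 52; 51; 32; 30; 31; 35; 33; 34; 25; 26; 24; 28; 29; 27; 8; 7; 6; 11; 10; 9; 4; 5; 3; 1; 2; 0; 20; 19; 18; 23; 22; 21; 16; 17; 15; 13; 14; 12]; [:: 48; 49; 50; 51; 52; 53; 54; 55; 56; 57; 58; 59; 9; 10; 11; 2; 0; 1; 5; 3; 4; 8; 6; 7; 21; 22; 23; 14; 12; 13; 17; 15; 16; 20; 18; 19; 33; 34; 35; 26; 24; 25; 29; 27; 28; 32; 30; 31; 45; 46; 47; 38; 36; 37; 41; 39; 40; 44; 42; 43]; [:: 49; 50; 48; 54; 56; 55; 57; 59; 58; 51; 52; 53; 10; 11; 9; 5; 4; 3; 8; 7; 6; 2; 0; 1; 33; 35; 34; 26; 25; 24; 32; 30; 31; 29; 27; 28; 45; 47; 46; 38; 37; 36; 44; 42; 43; 41; 39; 40; 21; 22; 23; 14; 12; 13; 17; 15; 16; 20; 18; 19]; [:: 50; 48; 49; 57; 58; 59; 51; 53; 52; 54; 56; 55; 11; 9; 10; 8; 6; 7; 2; 1; 0; 5; 4; 3; 45; 46; 47; 38; 36; 37; 41; 39; 40; 44;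 42; 43; 21; 23; 22; 14; 13; 12; 20; 18; 19; 17; 15; 16; 33; 35; 34; 26; 25; 24; 32; 30; 31; 29; 27; 28]; [:: 51; 53; 52; 48; 50; 49; 58; 57; 59; 55; 54; 56; 21; 23; 22; 14; 13; 12; 20; 18; 19; 17; 15; 16; 9; 11; 10; 2; 1; 0; 8; 6; 7; 5; 3; 4; 46; 45; 47; 41; 39; 40; 38; 36; 37; 44; 43; 42; 34; 33; 35; 29; 27; 28; 26; 24; 25; 32; 31; 30]; [:: 52; 51; 53; 55; 54; 56; 48; 49; 50; 58; 59; 57; 22; 21; 23; 17; 15; 16; 14; 12; 13; 20; 19; 18; 34; 33; 35; 29; 27; 28; 26; 24; 25; 32; 31; 30; 9; 10; 11; 2; 0; 1; 5; 3; 4; 8; 6; 7; 46; 47; 45; 41; 40; 39; 44; 43; 42; 38; 36; 37]; [:: 53; 52; 51; 58; 59; 57; 55; 56; 54; 48; 50; 49; 23; 22; 21; 20; 19; 18; 17; 16; 15; 14; 13; 12; 46; 47; 45; 41; 40; 39; 44; 43; 42; 38; 36; 37; 34; 35; 33; 29; 28; 27; 32; 31; 30; 26; 24; 25; 9; 11; 10; 2; 1; 0; 8; 6; 7; 5; 3; 4]; [:: 54; 55; 56; 49; 48; 50; 52; 51; 53; 59; 57; 58; 33; 34; 35; 26; 24; 25; 29; 27; 28; 32; 30; 31; 10; 9; 11; 5; 3; 4; 2; 0; 1; 8; 7; 6; 22; 21; 23; 17; 15; 16; 14; 12; 13; 20; 19; 18; 47; 45; 46; 44; 42; 43; 38; 37;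 36; 41; 40; 39]; [:: 55; 56; 54; 52; 53; 51; 59; 58; 57; 49; 48; 50; 34; 35; 33; 29; 28; 27; 32; 31; 30; 26; 24; 25; 22; 23; 21; 17; 16; 15; 20; 19; 18; 14; 12; 13; 47; 46; 45; 44; 43; 42; 41; 40; 39; 38; 37; 36; 10; 9; 11; 5; 3; 4; 2; 0; 1; 8; 7; 6]; [:: 56; 54; 55; 59; 57; 58; 49; 50; 48; 52; 53; 51; 35; 33; 34; 32; 30; 31; 26; 25; 24; 29; 28; 27; 47; 45; 46; 44; 42; 43; 38; 37; 36; 41; 40; 39; 10; 11; 9; 5; 4; 3; 8; 7; 6; 2; 0; 1; 22; 23; 21; 17; 16; 15; 20; 19; 18; 14; 12; 13]; [:: 57; 59; 58; 50; 49; 48; 56; 54; 55; 53; 51; 52; 45; 47; 46; 38; 37; 36; 44; 42; 43; 41; 39; 40; 11; 10; 9; 8; 7; 6; 5; 4; 3; 2; 1; 0; 35; 33; 34; 32; 30; 31; 26; 25; 24; 29; 28; 27; 23; 21; 22; 20; 18; 19; 14; 13; 12; 17; 16; 15]; [:: 58; 57; 59; 53; 51; 52; 50; 48; 49; 56; 55; 54; 46; 45; 47; 41; 39; 40; 38; 36; 37; 44; 43; 42; 23; 21; 22; 20; 18; 19; 14; 13; 12; 17; 16; 15; 11; 9; 10; 8; 6; 7; 2; 1; 0; 5; 4; 3; 35; 34; 33; 32; 31; 30; 29; 28; 27; 26; 25; 24]; [:: 59; 58; 57; 56; 55; 54; 53; 52; 51; 50; 49; 48; 47; 46; 45; 44;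 43; 42; 41; 40; 39; 38; 37; 36; 35; 34; 33; 32; 31; 30; 29; 28; 27; 26; 25; 24; 23; 22; 21; 20; 19; 18; 17; 16; 15; 14; 13; 12; 11; 10; 9; 8; 7; 6; 5; 4; 3; 2; 1; 0]].
Definition INVT : seq nat := [:: 0; 2; 1; 3; 6; 9; 4; 10; 8; 5; 7; 11; 12; 13; 14; 24; 48; 36; 26; 37; 50; 25; 49; 38; 15; 21; 18; 27; 39; 51; 30; 54; 45; 33; 42; 57; 17; 19; 23; 28; 52; 41; 34; 43; 58; 32; 56; 47; 16; 22; 20; 29; 40; 53; 31; 55; 46; 35; 44; 59].
Definition AL : seq (nat * nat) := [:: (1, 18); (1, 51); (2, 6); (2, 11); (3, 24); (3, 40); (3, 44); (4, 3); (4, 16); (4, 28); (5, 7); (5, 8); (6, 19); (6, 46); (7, 11); (8, 23); (8, 29); (8, 35); (9, 10); (9, 34); (9, 46); (10, 3); (10, 11); (10, 21); (10, 35); (10, 37); (11, 45); (12, 24); (14, 19); (14, 33); (15, 16); (15, 24); (15, 33); (15, 51); (15, 55); (16, 9); (16, 10); (16, 26); (17, 31); (17, 45); (18, 38); (18, 44); (19, 15); (19, 17); (19, 59); (20, 42); (21, 32); (22, 9); (22, 10); (22, 19); (22, 49); (24, 9); (24, 30); (24, 43); (24, 48); (25, 20); (25, 44); (26, 22); (26, 39); (26, 42); (27, 35); (27, 45); (28, 1); (28, 32); (29, 31); (29, 33); (29, 40); (29, 55); (30, 29); (31, 2); (31, 37); (32, 1); (32, 21); (32, 22); (33, 7); (33,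 39); (33, 55); (34, 4); (35, 2); (35, 5); (37, 10); (37, 39); (37, 47); (38, 31); (38, 34); (38, 35); (39, 21); (39, 40); (39, 46); (40, 16); (40, 27); (40, 42); (41, 56); (43, 13); (43, 31); (43, 45); (44, 1); (44, 24); (45, 52); (46, 15); (46, 51); (47, 39); (48, 7); (48, 18); (49, 33); (49, 52); (50, 5); (50, 46); (51, 14); (51, 39); (51, 49); (51, 50); (52, 17); (52, 27); (52, 34); (52, 49); (52, 53); (53, 23); (53, 44); (54, 20); (54, 36); (54, 38); (57, 17); (57, 23); (57, 37); (58, 38); (58, 42); (59, 4); (59, 6); (59, 12); (59, 18); (59, 47)].
Definition AB : seq (nat * nat) := [:: (35, 59); (25, 22); (17, 37); (4, 8); (15, 27); (23, 45); (14, 21); (9, 11); (14, 23); (20, 58); (40, 56); (1, 11); (22, 57); (17, 45); (1, 5); (22, 58); (21, 34); (17, 47); (36, 19); (18, 30); (13, 21); (1, 8); (3, 6); (14, 17); (13, 23); (21, 28); (14, 16); (3, 24); (37, 41); (5, 49); (57, 59); (3, 27); (5, 51); (1, 21); (9, 33); (6, 31); (4, 40); (10, 44); (6, 32); (10, 43); (5, 57); (4, 42); (50, 44); (25, 54); (10, 47); (11, 55); (11, 51); (6, 35); (4, 46); (25, 57); (11, 53); (1, 48); (37, 28); (4, 13); (11, 38); (11, 37); (3, 14); (10, 24); (11, 36); (5, 12); (13, 36); (9, 54); (9, 56); (50, 59); (12, 25); (14, 49); (7, 35); (5, 22); (48, 46); (6, 40); (10, 35); (9, 58); (2, 47); (10,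 34); (10, 27); (11, 39); (5, 15); (5, 17); (6, 46); (4, 22); (2, 50); (50, 29); (49, 40); (8, 12); (10, 48); (4, 26); (3, 54); (21, 49); (50, 31); (11, 35); (2, 53); (26, 57); (4, 32); (4, 28); (8, 23); (48, 59); (4, 29); (9, 46); (3, 57); (5, 44); (9, 40); (26, 54); (1, 36); (3, 37); (9, 14); (25, 39); (2, 26); (9, 13); (5, 33); (6, 54); (37, 58); (12, 36); (8, 32); (1, 41); (11, 23); (24, 54); (27, 39); (9, 16); (5, 35); (2, 30); (1, 45); (8, 33); (8, 27); (9, 18); (4, 54); (8, 28); (7, 41); (6, 53); (4, 55); (7, 40); (3, 46); (10, 22)].
Definition AW : seq (seq (nat * nat)) := [:: [:: (19, 70); (100, 59); (28, 91); (100, 7); (7, 91); (6, 89)]; [:: (20, 5); (20, 123); (50, 9); (122, 91); (84, 5); (99, 23)]; [:: (69, 124); (27, 120); (49, 125); (81, 86); (39, 18); (74, 23)]; [:: (79, 71); (79, 102); (71, 21); (74, 79); (71, 7); (69, 10)]; [:: (7, 60); (16, 12); (7, 17); (55, 17); (119, 33); (9, 20)]; [:: (15, 78); (7, 125); (123, 12); (86, 17); (25, 0); (86, 24)]; [:: (15, 37); (19, 7); (70, 24); (82, 1); (0, 24); (0, 24)]; [:: (11, 79); (10, 71); (71, 128); (78, 80); (80, 11); (35, 78)]; [:: (71, 6); (71, 53); (125, 31); (37, 24); (125, 118); (73, 113)]; [:: (31, 5); (71, 8); (96, 30); (81, 131); (96, 99); (97, 66)]; [:: (32, 74); (32, 102);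 (112, 30); (52, 40); (71, 125); (32, 8)]; [:: (7, 127); (69, 79); (96, 3); (106, 2); (77, 7); (96, 18)]; [:: (59, 5); (59, 66); (105, 8); (24, 38); (74, 27); (45, 31)]; [:: (44, 79); (51, 23); (7, 38); (0, 44); (5, 32); (63, 110)]; [:: (11, 78); (10, 106); (79, 102); (106, 74); (78, 10); (47, 77)]; [:: (9, 0); (12, 60); (32, 25); (28, 8); (59, 32); (32, 24)]; [:: (23, 19); (11, 19); (23, 19); (23, 19); (15, 20); (15, 20)]; [:: (0, 19); (11, 82); (45, 6); (121, 8); (126, 90); (125, 89)]; [:: (124, 96); (120, 118); (30, 122); (52, 54); (73, 128); (55, 128)]; [:: (121, 10); (121, 74); (67, 58); (76, 119); (130, 66); (118, 34)]; [:: (93, 37); (57, 7); (47, 23); (81, 94); (73, 120); (35, 23)]; [:: (48, 78); (80, 79); (69, 18); (78, 36); (80, 79); (22, 51)]; [:: (47, 48); (18, 51); (47, 48); (78, 74); (102, 11); (78, 11)]; [:: (81, 7); (82, 27); (56, 7); (78, 82); (82, 20); (120, 95)]; [:: (126, 113); (113, 37); (103, 81); (45, 113); (130, 11); (59, 90)]; [:: (75, 60); (36, 60); (72, 9); (23, 45); (5, 91); (66, 99)]; [:: (1, 20); (18, 13); (38, 23); (122, 16); (83, 44); (92, 120)]; [:: (47, 40); (42, 90); (95, 24); (61, 81); (51, 121); (55, 24)]; [:: (11, 89); (11, 86); (91, 11); (88, 11); (85, 81); (105, 30)]; [:: (76, 57); (51, 42); (79, 76); (34, 33); (51, 57); (57,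 31)]; [:: (53, 91); (53, 91); (53, 126); (37, 126); (37, 105); (37, 59)]; [:: (7, 113); (6, 88); (118, 111); (118, 79); (42, 90); (42, 90)]; [:: (79, 1); (42, 35); (42, 51); (42, 51); (42, 35); (76, 27)]; [:: (42, 54); (107, 5); (11, 100); (107, 79); (121, 79); (35, 5)]; [:: (110, 42); (79, 57); (27, 47); (35, 27); (110, 99); (108, 27)]; [:: (89, 64); (131, 53); (57, 77); (57, 85); (80, 23); (80, 23)]; [:: (125, 112); (90, 88); (120, 28); (35, 49); (102, 65); (29, 36)]; [:: (30, 114); (59, 49); (126, 1); (124, 84); (69, 29); (91, 125)]; [:: (122, 13); (10, 53); (4, 107); (39, 99); (122, 63); (4, 116)]; [:: (70, 113); (124, 23); (48, 107); (70, 113); (55, 13); (55, 107)]; [:: (103, 47); (85, 28); (69, 6); (130, 129); (89, 49); (124, 29)]; [:: (130, 17); (103, 17); (114, 85); (116, 131); (15, 100); (116, 35)]; [:: (63, 68); (121, 25); (60, 55); (13, 56); (24, 9); (73, 9)]; [:: (113, 72); (13, 25); (83, 119); (39, 55); (61, 71); (113, 85)]; [:: (102, 28); (28, 10); (110, 82); (110, 82); (57, 129); (129, 124)]; [:: (119, 129); (67, 6); (15, 56); (15, 56); (102, 41); (55, 129)]; [:: (86, 70); (23, 64); (12, 22); (53, 48); (13, 18); (13, 18)]; [:: (89, 94); (33, 0); (8, 72); (36, 72); (27, 54); (131, 94)]; [:: (121, 122); (125, 20); (89, 66); (121, 20); (55, 90); (121, 122)]; [:: (73, 23); (126, 11); (88,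 19); (59, 72); (42, 87); (126, 66)]; [:: (73, 116); (26, 35); (38, 59); (112, 66); (73, 14); (26, 126)]; [:: (96, 110); (62, 115); (79, 82); (8, 64); (128, 68); (128, 16)]; [:: (124, 127); (27, 28); (99, 81); (49, 4); (49, 4); (58, 77)]; [:: (31, 101); (124, 58); (101, 4); (109, 27); (31, 58); (27, 75)]; [:: (60, 42); (97, 22); (24, 5); (56, 96); (128, 19); (50, 114)]; [:: (28, 38); (120, 20); (12, 38); (69, 63); (120, 20); (120, 13)]; [:: (52, 7); (54, 49); (82, 126); (19, 28); (66, 37); (82, 72)]; [:: (37, 112); (66, 118); (46, 6); (93, 6); (28, 1); (28, 100)]; [:: (66, 27); (37, 68); (38, 130); (5, 4); (112, 104); (111, 103)]; [:: (37, 35); (37, 51); (37, 35); (85, 52); (85, 30); (24, 89)]; [:: (0, 110); (0, 110); (76, 90); (91, 118); (40, 82); (67, 89)]; [:: (92, 49); (112, 16); (112, 111); (22, 86); (92, 3); (3, 86)]; [:: (88, 24); (66, 128); (10, 26); (10, 26); (56, 16); (46, 129)]; [:: (102, 112); (44, 51); (113, 54); (72, 112); (107, 33); (111, 35)]; [:: (68, 129); (128, 32); (125, 129); (32, 53); (129, 15); (66, 119)]; [:: (16, 97); (51, 73); (57, 47); (73, 47); (76, 1); (67, 97)]; [:: (63, 121); (102, 9); (25, 130); (70, 103); (73, 78); (71, 119)]; [:: (68, 57); (68, 73); (16, 51); (57, 68); (16, 51); (47, 68)]; [:: (54, 42); (52, 30); (100, 52); (33, 44); (123, 110); (126, 112)];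 [:: (85, 1); (85, 1); (85, 46); (81, 74); (91, 74); (59, 74)]; [:: (89, 42); (27, 74); (66, 91); (27, 74); (81, 57); (58, 73)]; [:: (129, 71); (129, 60); (56, 95); (33, 95); (74, 91); (129, 71)]; [:: (120, 110); (63, 71); (42, 107); (111, 10); (94, 107); (7, 110)]; [:: (35, 118); (37, 10); (91, 95); (93, 94); (37, 31); (93, 73)]; [:: (54, 52); (66, 89); (54, 52); (112, 52); (118, 105); (111, 69)]; [:: (64, 14); (32, 54); (32, 54); (37, 28); (94, 56); (94, 41)]; [:: (51, 104); (51, 104); (31, 51); (31, 51); (51, 27); (104, 51)]; [:: (23, 10); (36, 95); (103, 27); (0, 26); (72, 67); (63, 49)]; [:: (85, 129); (85, 46); (64, 84); (79, 63); (94, 77); (81, 74)]; [:: (83, 82); (83, 30); (64, 8); (64, 8); (83, 131); (130, 55)]; [:: (70, 96); (69, 110); (51, 123); (57, 88); (30, 66); (30, 66)]; [:: (22, 120); (22, 101); (83, 22); (124, 16); (99, 96); (30, 27)]; [:: (70, 5); (124, 66); (28, 105); (74, 44); (57, 124); (129, 87)]; [:: (40, 29); (95, 11); (53, 11); (125, 11); (121, 29); (10, 13)]; [:: (121, 60); (35, 37); (56, 117); (118, 15); (8, 106); (6, 81)]; [:: (77, 37); (77, 84); (112, 93); (112, 76); (103, 75); (76, 102)]; [:: (111, 102); (58, 43); (56, 108); (118, 82); (92, 74); (52, 96)]; [:: (37, 80); (70, 130); (23, 110); (46, 36); (16, 36); (124, 1)]; [:: (75, 55); (111, 98); (111, 106);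 (29, 26); (46, 83); (93, 105)]; [:: (73, 0); (71, 6); (121, 0); (62, 6); (40, 31); (62, 45)]; [:: (1, 81); (1, 75); (78, 1); (100, 81); (78, 1); (69, 100)]; [:: (67, 48); (123, 130); (117, 14); (14, 67); (99, 3); (3, 98)]; [:: (86, 47); (86, 93); (93, 0); (93, 111); (64, 7); (64, 21)]; [:: (31, 52); (31, 52); (52, 81); (31, 52); (52, 27); (81, 52)]; [:: (86, 104); (87, 11); (125, 53); (27, 88); (86, 32); (86, 32)]; [:: (53, 88); (44, 30); (44, 30); (44, 30); (94, 86); (94, 86)]; [:: (6, 129); (102, 75); (6, 68); (74, 91); (33, 85); (74, 81)]; [:: (68, 63); (123, 7); (42, 7); (124, 40); (16, 63); (35, 40)]; [:: (69, 73); (69, 23); (121, 21); (95, 70); (40, 109); (130, 86)]; [:: (129, 99); (107, 47); (20, 56); (121, 90); (90, 6); (113, 6)]; [:: (71, 117); (50, 15); (13, 106); (13, 106); (47, 91); (105, 120)]; [:: (89, 97); (104, 81); (69, 130); (82, 130); (1, 41); (89, 97)]; [:: (29, 90); (113, 10); (54, 73); (54, 73); (112, 105); (65, 120)]; [:: (41, 30); (96, 44); (65, 13); (44, 97); (6, 31); (42, 123)]; [:: (50, 68); (50, 68); (79, 110); (99, 51); (100, 76); (35, 99)]; [:: (50, 86); (115, 81); (0, 96); (17, 53); (103, 70); (12, 71)]; [:: (99, 48); (38, 33); (94, 1); (127, 8); (72, 89); (86, 30)]; [:: (46, 38); (81, 38); (46, 72); (66, 104); (111, 95); (130, 93)]; [::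 (34, 115); (100, 57); (73, 32); (42, 67); (73, 100); (1, 73)]; [:: (83, 41); (100, 41); (82, 65); (82, 65); (70, 118); (38, 4)]; [:: (105, 42); (38, 93); (6, 87); (94, 36); (27, 37); (105, 42)]; [:: (38, 78); (34, 28); (45, 129); (126, 129); (94, 28); (94, 69)]; [:: (83, 70); (79, 55); (111, 5); (61, 62); (94, 119); (64, 25)]; [:: (98, 69); (98, 16); (69, 98); (33, 109); (9, 116); (116, 33)]; [:: (40, 42); (22, 42); (121, 85); (76, 55); (30, 81); (30, 81)]; [:: (83, 36); (3, 50); (73, 3); (56, 5); (100, 12); (25, 35)]; [:: (78, 75); (90, 16); (78, 5); (5, 78); (62, 68); (105, 58)]; [:: (91, 70); (91, 29); (91, 65); (91, 65); (118, 0); (59, 65)]; [:: (114, 12); (0, 85); (103, 108); (68, 89); (0, 108); (130, 108)]; [:: (76, 129); (95, 94); (129, 72); (52, 45); (16, 72); (68, 13)]; [:: (17, 93); (17, 11); (31, 111); (87, 93); (11, 105); (23, 88)]; [:: (24, 6); (17, 32); (11, 94); (130, 118); (53, 38); (65, 38)]; [:: (88, 76); (61, 71); (76, 17); (107, 96); (113, 17); (39, 31)]; [:: (35, 0); (59, 69); (118, 110); (126, 104); (71, 60); (6, 110)]; [:: (36, 17); (58, 57); (23, 59); (75, 88); (5, 99); (38, 10)]; [:: (85, 54); (79, 116); (69, 118); (60, 118); (60, 49); (0, 47)]; [:: (37, 9); (85, 47); (22, 111); (117, 6); (106, 0); (85, 51)]; [:: (44, 117); (116, 43); (120, 27); (130,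 43); (130, 43); (0, 43)]; [:: (91, 116); (47, 19); (10, 42); (91, 116); (39, 125); (26, 40)]; [:: (25, 131); (105, 131); (105, 48); (25, 50); (25, 131); (82, 105)]; [:: (21, 70); (49, 91); (24, 91); (84, 25); (60, 126); (84, 104)]; [:: (105, 102); (49, 129); (49, 105); (49, 105); (129, 49); (124, 5)]].
Definition KL : seq nat := [:: 3; 11].
Definition KW : seq (seq ((nat * nat) * (nat * nat))) := [:: [:: ((1, 13), (2, 0)); ((1, 19), (10, 0)); ((0, 10), (127, 1)); ((0, 18), (8, 1)); ((0, 18), (18, 0)); ((0, 2), (18, 0))]; [:: ((0, 86), (10, 1)); ((0, 114), (10, 1)); ((1, 2), (86, 0)); ((1, 10), (74, 0)); ((1, 10), (18, 1)); ((1, 2), (18, 1))]].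
Definition gmul (x y : nat) : nat := nth 0 (nth [::] MT x) y.
Definition ginv (x : nat) : nat := nth 0 INVT x.
Definition gcomm (x y : nat) : nat := gmul x (gmul y (gmul (ginv x) (ginv y))).
Definition all60 (P : nat -> bool) := all P (iota 0 60).
Lemma all60P P : all60 P -> forall x, x < 60 -> P x.
Proof. by move=> /allP H x hx; apply: H; rewrite mem_iota. Qed.

Lemma chk_cl : all60 (fun x => (ginv x < 60) && all60 (fun y => gmul x y < 60)).
Proof. by vm_compute. Qed.
Lemma chk_assoc : all60 (fun x => all60 (fun y => all60 (fun z =>
   gmul (gmul x y) z == gmul x (gmul y z)))).
Proof. by vm_compute. Qed.
Lemma chk_laws : all60 (fun x => [&& gmul 0 x == x, gmul x 0 == x,
   gmul x (ginv x) == 0 & gmul (ginv x) x == 0]).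
Proof. by vm_compute. Qed.
Lemma chk_laws2 : all60 (fun x => [&& ginv (ginv x) == x,
   gcomm 0 x == 0, gcomm x 0 == 0 & all60 (fun y => ginv (gmul x y) == gmul (ginv y) (ginv x))]).
Proof. by vm_compute. Qed.
Lemma ginv0 : ginv 0 = 0. Proof. by []. Qed.

Lemma gmul_lt x y : x < 60 -> y < 60 -> gmul x y < 60.
Proof. by move=> hx hy; move/all60P/(_ x hx)/andP: chk_cl => [_ /all60P/(_ y hy)]. Qed.
Lemma ginv_lt x : x < 60 -> ginv x < 60.
Proof. by move=> hx; move/all60P/(_ x hx)/andP: chk_cl => [-> _]. Qed.
Lemma gcomm_lt x y : x < 60 -> y < 60 -> gcomm x y < 60.
Proof. by move=> hx hy; rewrite /gcomm !(gmul_lt, ginv_lt). Qed.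
Lemma gassoc x y z : x < 60 -> y < 60 -> z < 60 -> gmul (gmul x y) z = gmul x (gmul y z).
Proof.
move=> hx hy hz; have H1 := all60P chk_assoc hx; have H2 := all60P H1 hy.
exact/eqP/(all60P H2 hz).
Qed.
Lemma gmul0l x : x < 60 -> gmul 0 x = x.
Proof. by move=> hx; case/and4P: (all60P chk_laws hx) => /eqP ?. Qed.
Lemma gmul0r x : x < 60 -> gmul x 0 = x.
Proof. by move=> hx; case/and4P: (all60P chk_laws hx) => _ /eqP ?. Qed.
Lemma gmulV x : x < 60 -> gmul x (ginv x) = 0.
Proof. by move=> hx; case/and4P: (all60P chk_laws hx) => _ _ /eqP ?. Qed.
Lemma gVmul x : x < 60 -> gmul (ginv x) x = 0.
Proof. by move=> hx; case/and4P: (all60P chk_laws hx) => _ _ _ /eqP ?. Qed.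
Lemma ginvK x : x < 60 -> ginv (ginv x) = x.
Proof. by move=> hx; case/and4P: (all60P chk_laws2 hx) => /eqP ?. Qed.
Lemma gcomm0l x : x < 60 -> gcomm 0 x = 0.
Proof. by move=> hx; case/and4P: (all60P chk_laws2 hx) => _ /eqP ?. Qed.
Lemma gcomm0r x : x < 60 -> gcomm x 0 = 0.
Proof. by move=> hx; case/and4P: (all60P chk_laws2 hx) => _ _ /eqP ?. Qed.
Lemma ginvM x y : x < 60 -> y < 60 -> ginv (gmul x y) = gmul (ginv y) (ginv x).
Proof. by move=> hx hy; case/and4P: (all60P chk_laws2 hx) => _ _ _ /all60P/(_ y hy)/eqP. Qed.

Definition sc (s p q c : nat) : nat :=
  match s with
  | 0 => gcomm p (gcomm q c) | 1 => gcomm p (gcomm c q)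
  | 2 => gcomm q (gcomm p c) | 3 => gcomm q (gcomm c p)
  | 4 => gcomm c (gcomm p q) | _ => gcomm c (gcomm q p) end.

Definition aP k := (nth (0,0) AL k).1.
Definition aX k := (nth (0,0) AL k).2.
Definition kK k := nth 0 KL k.
Definition wA k s := nth (0,0) (nth [::] AW k) s.
Definition wK k s := nth ((0,0),(0,0)) (nth [::] KW k) s.

Definition checkA := all (fun k => all (fun s =>
  [&& (wA k s).1 < size AL, (wA k s).2 < size AL,
      sc s (aP (wA k s).1) (aP (wA k s).2) (gmul (aX (wA k s).1) (aX (wA k s).2)) == aP k
    & gcomm (aX (wA k s).1) (aX (wA k s).2) == aX k]) (iota 0 6)) (iota 0 (size AL)).
Definition checkAB := all (fun k =>
  [&& (nth (0,0) AB k).1 < 60, (nth (0,0) AB k).2 < 60,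
      gmul (nth (0,0) AB k).1 (nth (0,0) AB k).2 == aP k
    & gcomm (nth (0,0) AB k).1 (nth (0,0) AB k).2 == aX k]) (iota 0 (size AL)).
Definition checkK := all (fun k => (kK k < 60) && (kK k != 0) && all (fun s =>
  [&& (wK k s).1.1 < size KL, (wK k s).1.2 < size AL &
      sc s (kK (wK k s).1.1) (aP (wK k s).1.2) (aX (wK k s).1.2) == kK k] &&
  [&& (wK k s).2.1 < size AL, (wK k s).2.2 < size KL
    & sc s (aP (wK k s).2.1) (kK (wK k s).2.2) (aX (wK k s).2.1) == kK k]) (iota 0 6))
  (iota 0 (size KL)).

Lemma checkA_ok : checkA. Proof. by vm_compute. Qed.
Lemma checkAB_ok : checkAB. Proof. by vm_compute. Qed.
Lemma checkK_ok : checkK. Proof. by vm_compute. Qed.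
Lemma AL0 : (0 < size AL) && (aP 0 != 0). Proof. by vm_compute. Qed.
Lemma KL0 : 0 < size KL. Proof. by vm_compute. Qed.

Lemma specA k s : k < size AL -> s < 6 -> exists k1 k2,
  [/\ k1 < size AL, k2 < size AL,
      sc s (aP k1) (aP k2) (gmul (aX k1) (aX k2)) = aP k
    & gcomm (aX k1) (aX k2) = aX k].
Proof.
move=> hk hs; have /allP H0 := checkA_ok; move: (H0 k); rewrite mem_iota hk => /(_ isT).
move/allP => H1; move: (H1 s); rewrite mem_iota hs => /(_ isT) /and4P [h1 h2 /eqP h3 /eqP h4].
by exists (wA k s).1, (wA k s).2.
Qed.

Lemma specAB k : k < size AL -> exists a b,
  [/\ a < 60, b < 60, gmul a b = aP k & gcomm a b = aX k].
Proof.
move=> hk; have /allP H0 := checkAB_ok; move: (H0 k); rewrite mem_iota hk => /(_ isT).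
move/and4P => [h1 h2 /eqP h3 /eqP h4]; by exists (nth (0,0) AB k).1, (nth (0,0) AB k).2.
Qed.

Lemma specK k : k < size KL -> [/\ kK k < 60, kK k != 0 & forall s, s < 6 ->
  (exists kk ka, [/\ kk < size KL, ka < size AL & sc s (kK kk) (aP ka) (aX ka) = kK k]) /\
  (exists ka kk, [/\ kk < size KL, ka < size AL & sc s (aP ka) (kK kk) (aX ka) = kK k])].
Proof.
move=> hk; have /allP H0 := checkK_ok; move: (H0 k); rewrite mem_iota hk => /(_ isT).
case/andP => /andP [h1 h2] /allP H; split => // s hs.
move: (H s); rewrite mem_iota hs => /(_ isT) /andP [/and3P [a1 a2 /eqP a3] /and3P [a4 a5 /eqP a6]].
by split; [exists (wK k s).1.1, (wK k s).1.2 | exists (wK k s).2.1, (wK k s).2.2].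
Qed.

Section Main.
Variable T : eqType.
Implicit Types (u v r : seq (letter T)) (e w : expr T) (U : seq T).

Definition cancels (x y : letter T) := (y.1 == x.1) && (y.2 != x.2).
Fixpoint reducedw (r : seq (letter T)) : bool :=
  match r with
  | x :: ((y :: _) as r') => ~~ cancels x y && reducedw r'
  | _ => true end.
Definition inv_l (x : letter T) : letter T := (x.1, ~~ x.2).

Lemma reducedw_tail x r : reducedw (x :: r) -> reducedw r.
Proof. by case: r => //= y r /andP []. Qed.

Lemma push_red x r : reducedw r -> reducedw (push x r).
Proof.
case: r => [|y r] //= H; case: ifP => Hc; first exact: (reducedw_tail H).
by rewrite /= /cancels Hc H.
Qed.

Lemma push_cancel x r : reducedw r -> push x (push (inv_l x) r) = r.
Proof.
case: x => a b; case: r => [|[c d] r] /=.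
  by rewrite /cancels /= eqxx; case: b.
rewrite /cancels /=; case: eqP => [->|ne] /=; last first.
  by move=> _; rewrite eqxx; case: b.
case: (boolP (d != ~~ b)) => hd /= Hr.
  have db : d = b by destruct b, d.
  subst d.
  case: r Hr => [|[e f] r] //= /andP [Hn _].
  by rewrite /cancels /= in Hn *; rewrite (negbTE Hn).
by rewrite eqxx; destruct b.
Qed.

Definition act u r := foldr (@push T) r u.
Lemma act_cat u v r : act (u ++ v) r = act u (act v r).
Proof. exact: foldr_cat. Qed.
Lemma act_red u r : reducedw r -> reducedw (act u r).
Proof. by elim: u => //= x u IH H; apply: push_red; apply: IH. Qed.

Lemma inv_word_cons x u : inv_word (x :: u) = inv_word u ++ [:: inv_l x].
Proof. by rewrite /inv_word /= rev_cons cats1. Qed.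
Lemma inv_lK x : inv_l (inv_l x) = x.
Proof. by case: x => a b; rewrite /inv_l /= negbK. Qed.
Lemma inv_wordK u : inv_word (inv_word u) = u.
Proof.
rewrite /inv_word map_rev revK -map_comp -[RHS]map_id; apply: eq_map => -[a b] /=.
by rewrite negbK.
Qed.
Lemma size_inv_word u : size (inv_word u) = size u.
Proof. by rewrite /inv_word size_rev size_map. Qed.

Lemma act_inv u r : reducedw r -> act (inv_word u) (act u r) = r.
Proof.
elim: u r => //= x u IH r Hr; rewrite inv_word_cons act_cat /=.
have := push_cancel (inv_l x) (act_red u Hr); rewrite inv_lK => ->.
exact: IH.
Qed.
Lemma act_inv' u r : reducedw r -> act u (act (inv_word u) r) = r.
Proof. by move=> Hr; have := act_inv (inv_word u) Hr; rewrite inv_wordK. Qed.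

Definition triv u := forall r, reducedw r -> act u r = r.
Lemma triv_nil : triv [::]. Proof. by []. Qed.
Lemma triv_cat u v : triv u -> triv v -> triv (u ++ v).
Proof. by move=> Hu Hv r Hr; rewrite act_cat Hv // Hu. Qed.
Lemma triv_inv u : triv u -> triv (inv_word u).
Proof. by move=> Hu r Hr; rewrite -{1}(Hu r Hr) act_inv. Qed.
Lemma triv_comm_l u v : triv u -> triv (u ++ v ++ inv_word u ++ inv_word v).
Proof.
move=> Hu r Hr; rewrite !act_cat (triv_inv Hu) ?act_red // Hu ?act_red //.
exact: act_inv'.
Qed.
Lemma triv_comm_r u v : triv v -> triv (u ++ v ++ inv_word u ++ inv_word v).
Proof.
move=> Hv r Hr; rewrite !act_cat (triv_inv Hv) // Hv ?act_red //.
exact: act_inv'.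
Qed.

Definition fr (S : seq T) e := filter (fun l : letter T => l.1 \notin S) (raw e).

Lemma filter_inv (p : pred (letter T)) u :
  (forall l, p (inv_l l) = p l) -> filter p (inv_word u) = inv_word (filter p u).
Proof.
move=> Hp; rewrite /inv_word filter_rev filter_map; congr rev; congr map.
by apply: eq_filter => l /=; have := Hp l.
Qed.

Lemma fr_comm S x y : fr S (EComm x y) =
  fr S x ++ fr S y ++ inv_word (fr S x) ++ inv_word (fr S y).
Proof. by rewrite /fr /= !filter_cat !filter_inv. Qed.

Lemma triv_reduce u : triv u -> reduce u = [::].
Proof. by move=> H; apply: (H [::]). Qed.

Lemma isW_size t U w : isW t U w -> size U = 2 ^ t.
Proof.
elim=> // {}t {}U P Q X Y Z _ HL _ HR; rewrite size_drop in HR.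
move: HL; rewrite size_take; case: ltnP => h; last by move=> e; rewrite e subnn expnS in HR; lia.
by move=> _; rewrite !expnS in HR h *; lia.
Qed.

Lemma halves_size t (U : seq T) : size U = 2 ^ t.+1 ->
  size (take (2 ^ t) U) = 2 ^ t /\ size (drop (2 ^ t) U) = 2 ^ t.
Proof.
move=> hs; rewrite size_take size_drop hs expnS.
have h : 0 < 2 ^ t by rewrite expn_gt0.
split; last by lia. by rewrite ifT //; lia.
Qed.

Lemma flen_Btree t (U : seq T) : size U = 2 ^ t -> flen (Btree t U) = 4 ^ t.
Proof.
elim: t U => [|t IH] U hs.
  by case: U hs => [|a [|]].
have [h1 h2] := halves_size hs.
by rewrite /= (IH _ h1) (IH _ h2) expnS; lia.
Qed.

Lemma pow_ineq k : 2 <= k -> 9 * 4 ^ k <= 4 * 6 ^ k.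
Proof.
elim: k => // k IH; rewrite ltnS leq_eqVlt => /orP [/eqP <- //|hk].
have := IH hk; rewrite !expnS; lia.
Qed.

Lemma isW_flen t U w : isW t U w ->
  (t = 1 /\ flen w = 2) \/ (2 <= t /\ 3 * flen w + 12 * 4 ^ t = 8 * 6 ^ t).
Proof.
elim=> [a b|{}t {}U P Q X Y Z HP IHP HQ IHQ C Hd h1 h2]; first by left.
right; split => //.
have sL := isW_size HP; have sR := isW_size HQ.
have fC : flen C = 2 * 4 ^ t.+1.
  rewrite /C; change (flen (Btree t.+1 (take (2 ^ t.+1) U)) + flen (Btree t.+1 (drop (2 ^ t.+1) U)) = 2 * 4 ^ t.+1).
  by rewrite !flen_Btree //; lia.
have E : flen (EComm X (EComm Y Z)) = 2 * flen X + 4 * flen Y + 4 * flen Z by rewrite /=; lia.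
rewrite E; clear E.
case: IHP => [[htP fP]|[htP fP]]; case: IHQ => [[htQ fQ]|[htQ fQ]];
  try (by move: htP htQ; lia).
- have t0 : t = 0 by case: htP.
  subst t; rewrite expn1 in fC.
  have -> : 4 ^ 2 = 16 by []. have -> : 6 ^ 2 = 36 by [].
  by case: Hd => [[-> -> ->]|[[-> -> ->]|[[-> -> ->]|[[-> -> ->]|[[-> -> ->]|[-> -> ->]]]]]] in h1 h2 *;
    rewrite ?fP ?fQ ?fC in h1 h2 *; lia.
- have hp := pow_ineq htP.
  move: fP fQ fC hp; rewrite [4 ^ t.+2]expnS [6 ^ t.+2]expnS.
  set A := 4 ^ t.+1; set B := 6 ^ t.+1 => fP fQ fC hp.
  by case: Hd => [[-> -> ->]|[[-> -> ->]|[[-> -> ->]|[[-> -> ->]|[[-> -> ->]|[-> -> ->]]]]]] in h1 h2 *;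
    rewrite ?fC in h1 h2 *; lia.
Qed.

Lemma size_push (x : letter T) r : size (push x r) <= (size r).+1.
Proof. by case: r => [|y r] //=; case: ifP => //= _; lia. Qed.
Lemma size_reduce u : size (reduce u) <= size u.
Proof.
elim: u => //= x u IH; apply: leq_trans (size_push _ _) _; by rewrite ltnS.
Qed.
Lemma size_raw e : size (raw e) = flen e.
Proof.
elim: e => //= [x IHx y IHy|x IHx|x IHx y IHy];
  rewrite ?size_cat ?size_inv_word ?IHx ?IHy //; lia.
Qed.

Lemma exists_W t (U : seq T) : size U = 2 ^ t.+1 -> exists w, isW t.+1 U w.
Proof.
elim: t U => [|t IH] U hs.
  case: U hs => [|a [|b [|]]] //= _; exists (EAdd (EGen a) (EGen b)); exact: isW_base.
have [h1 h2] := halves_size hs.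
have [P HP] := IH _ h1; have [Q HQ] := IH _ h2.
set C := EAdd (Btree t.+1 (take (2 ^ t.+1) U)) (Btree t.+1 (drop (2 ^ t.+1) U)).
case: (leqP (flen Q) (flen P)) => hQP.
  case: (leqP (flen C) (flen P)) => hCP.
    exists (EComm P (EComm Q C)); apply: (isW_step HP HQ) => //; by left.
  exists (EComm C (EComm P Q)); apply: (isW_step HP HQ); rewrite -/C.
  - by do 4 right; left.
  - exact: ltnW.
  - exact: ltnW (leq_ltn_trans hQP hCP).
case: (leqP (flen C) (flen Q)) => hCQ.
  exists (EComm Q (EComm P C)); apply: (isW_step HP HQ) => //.
  - by do 2 right; left.
  - exact: ltnW.
exists (EComm C (EComm P Q)); apply: (isW_step HP HQ); rewrite -/C.
- by do 4 right; left.
- exact: ltnW (ltn_trans hQP hCQ).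
- exact: ltnW.
Qed.

End Main.

Section Main2.
Variable T : eqType.
Implicit Types (u v r : seq (letter T)) (e w : expr T) (U : seq T).

Lemma mem_halves t U (a : T) : a \in U ->
  a \in take (2 ^ t) U \/ a \in drop (2 ^ t) U.
Proof. by rewrite -{1}(cat_take_drop (2 ^ t) U) mem_cat => /orP. Qed.

Lemma triv_Btree S t U s : size U = 2 ^ t -> s \in U -> s \in S -> triv (fr S (Btree t U)).
Proof.
elim: t U => [|t IH] U hs hsU hsS.
  case: U hs hsU => [|a [|]] //= _; rewrite inE => /eqP <-.
  by rewrite /fr /= hsS.
have [h1 h2] := halves_size hs.
rewrite fr_comm; case: (mem_halves t hsU) => h.
  by apply: triv_comm_l; apply: IH.
by apply: triv_comm_r; apply: IH.
Qed.

Lemma triv_W S t U w s1 s2 : isW t U w -> s1 != s2 -> s1 \in U -> s2 \in U ->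
  s1 \in S -> s2 \in S -> triv (fr S w).
Proof.
move=> H; elim: H s1 s2 => [a b|{}t {}U P Q X Y Z HP IHP HQ IHQ C Hd _ _] s1 s2 ne h1 h2 hS1 hS2.
  have [ha hb] : a \in S /\ b \in S.
    move: h1 h2; rewrite !inE.
    by case/orP=> /eqP e1; case/orP=> /eqP e2; subst; rewrite ?eqxx in ne.
  by rewrite /fr /= ha hb.
have sL := isW_size HP; have sR := isW_size HQ.
have key : triv (fr S P) \/ triv (fr S Q) \/ triv (fr S C).
  case: (mem_halves t.+1 h1) => g1; case: (mem_halves t.+1 h2) => g2.
  - by left; apply: (IHP s1 s2).
  - right; right; rewrite /fr /= filter_cat; apply: triv_cat.
      exact: (triv_Btree sL g1 hS1).
    exact: (triv_Btree sR g2 hS2).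
  - right; right; rewrite /fr /= filter_cat; apply: triv_cat.
      exact: (triv_Btree sL g2 hS2).
    exact: (triv_Btree sR g1 hS1).
  - by right; left; apply: (IHQ s1 s2).
have gen : triv (fr S X) \/ triv (fr S Y) \/ triv (fr S Z) -> triv (fr S (EComm X (EComm Y Z))).
  rewrite fr_comm fr_comm; case=> [hX|[hY|hZ]].
  - exact: triv_comm_l.
  - by apply: triv_comm_r; apply: triv_comm_l.
  - by apply: triv_comm_r; apply: triv_comm_r.
apply: gen.
by case: Hd => [[-> -> ->]|[[-> -> ->]|[[-> -> ->]|[[-> -> ->]|[[-> -> ->]|[-> -> ->]]]]]]; tauto.
Qed.

Fixpoint evalE (phi : T -> nat) e : nat :=
  match e with
  | EZero => 0
  | EGen a => phi a
  | EAdd x y => gmul (evalE phi x) (evalE phi y)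
  | ENeg x => ginv (evalE phi x)
  | EComm x y => gcomm (evalE phi x) (evalE phi y)
  end.
Definition lett (phi : T -> nat) (l : letter T) := if l.2 then phi l.1 else ginv (phi l.1).
Definition evalW (phi : T -> nat) u := foldr (fun l g => gmul (lett phi l) g) 0 u.
Definition okf (phi : T -> nat) := forall a, phi a < 60.

Lemma evalE_add phi x y : evalE phi (EAdd x y) = gmul (evalE phi x) (evalE phi y).
Proof. by []. Qed.
Lemma evalE_comm phi x y : evalE phi (EComm x y) = gcomm (evalE phi x) (evalE phi y).
Proof. by []. Qed.

Lemma lett_lt phi l : okf phi -> lett phi l < 60.
Proof. by move=> h; rewrite /lett; case: ifP => _; rewrite ?ginv_lt. Qed.
Lemma evalW_lt phi u : okf phi -> evalW phi u < 60.
Proof. by move=> h; elim: u => //= l u IH; rewrite gmul_lt ?lett_lt. Qed.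
Lemma evalE_lt phi e : okf phi -> evalE phi e < 60.
Proof.
move=> h; elim: e => //= [x IHx y IHy|x IHx|x IHx y IHy];
  by rewrite ?gmul_lt ?ginv_lt ?gcomm_lt.
Qed.

Lemma evalW_cat phi u v : okf phi -> evalW phi (u ++ v) = gmul (evalW phi u) (evalW phi v).
Proof.
move=> h; elim: u => /= [|l u IH]; first by rewrite gmul0l ?evalW_lt.
by rewrite IH gassoc ?lett_lt ?evalW_lt.
Qed.

Lemma evalW_inv phi u : okf phi -> evalW phi (inv_word u) = ginv (evalW phi u).
Proof.
move=> h; elim: u => //= l u IH.
rewrite inv_word_cons evalW_cat // IH /= gmul0r; last first.
  exact: lett_lt.
rewrite ginvM ?lett_lt ?evalW_lt //; congr gmul.
case: l => a [] //=; rewrite /lett /= ginvK //.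
Qed.

Lemma evalW_push phi x r : okf phi -> evalW phi (push x r) = gmul (lett phi x) (evalW phi r).
Proof.
move=> h; case: r => [|y r] //=; case: ifP => //.
case: x y => a b [c d] /= /andP [/eqP -> hd].
have db : d = ~~ b by move: hd; case: b; case: d.
subst d; clear hd.
rewrite -gassoc ?lett_lt ?evalW_lt //.
by rewrite /lett /=; case: b => /=; rewrite ?gmulV ?gVmul ?gmul0l ?evalW_lt.
Qed.

Lemma evalW_reduce phi u : okf phi -> evalW phi (reduce u) = evalW phi u.
Proof. by move=> h; elim: u => //= x u IH; rewrite evalW_push // IH. Qed.

Definition kill (S : seq T) (phi : T -> nat) := fun a => if a \in S then 0 else phi a.
Lemma okf_kill S phi : okf phi -> okf (kill S phi).
Proof. by move=> h a; rewrite /kill; case: ifP. Qed.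

Lemma evalW_filter S phi u : okf phi ->
  evalW phi (filter (fun l : letter T => l.1 \notin S) u) = evalW (kill S phi) u.
Proof.
move=> h; elim: u => //= [[a b]] u IH /=.
case: (boolP (a \in S)) => ha /=.
  have -> : lett (kill S phi) (a, b) = 0 by rewrite /lett /kill /= ha; case: b.
  by rewrite IH gmul0l //; apply: evalW_lt; exact: okf_kill.
have -> : lett (kill S phi) (a, b) = lett phi (a, b) by rewrite /lett /kill /= (negbTE ha).
by rewrite IH.
Qed.

Lemma evalW_raw phi e : okf phi -> evalW phi (raw e) = evalE phi e.
Proof.
move=> h; elim: e => //= [a|x IHx y IHy|x IHx|x IHx y IHy].
- by rewrite /lett /= gmul0r.
- by rewrite evalW_cat // IHx IHy.
- by rewrite evalW_inv // IHx.
- by rewrite !evalW_cat // !evalW_inv // IHx IHy.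
Qed.

Lemma killed_eval S phi e : okf phi -> killed S e -> evalE (kill S phi) e = 0.
Proof.
move=> h hk; rewrite -(@evalW_raw (kill S phi) e (okf_kill S h)).
rewrite -(@evalW_filter S phi (raw e) h) -(@evalW_reduce phi _ h).
by rewrite hk.
Qed.

Lemma evalE_ext phi1 phi2 e : phi1 =1 phi2 -> evalE phi1 e = evalE phi2 e.
Proof. by move=> H; elim: e => //= *; congruence. Qed.

Lemma Btree_ext t U phi1 phi2 : {in U, phi1 =1 phi2} ->
  evalE phi1 (Btree t U) = evalE phi2 (Btree t U).
Proof.
elim: t U => [|t IH] U H.
  by case: U H => [|a U] //= H; apply: H; rewrite inE eqxx.
rewrite /=; congr gcomm; apply: IH => a ha; apply: H.
  exact: mem_take ha.
exact: mem_drop ha.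
Qed.

Lemma perm_case t U P Q X Y Z :
  let C := EAdd (Btree t.+1 (take (2 ^ t.+1) U)) (Btree t.+1 (drop (2 ^ t.+1) U)) in
  (X, Y, Z) = (P, Q, C) \/ (X, Y, Z) = (P, C, Q) \/ (X, Y, Z) = (Q, P, C) \/
  (X, Y, Z) = (Q, C, P) \/ (X, Y, Z) = (C, P, Q) \/ (X, Y, Z) = (C, Q, P) ->
  exists2 s, s < 6 & forall phi, evalE phi (EComm X (EComm Y Z)) =
     sc s (evalE phi P) (evalE phi Q) (evalE phi C).
Proof.
move=> C.
case=> [[-> -> ->]|[[-> -> ->]|[[-> -> ->]|[[-> -> ->]|[[-> -> ->]|[-> -> ->]]]]]].
- by exists 0.
- by exists 1.
- by exists 2.
- by exists 3.
- by exists 4.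
- by exists 5.
Qed.

Lemma isW_ext t U w phi1 phi2 : isW t U w -> {in U, phi1 =1 phi2} ->
  evalE phi1 w = evalE phi2 w.
Proof.
move=> H; elim: H phi1 phi2 => [a b|{}t {}U P Q X Y Z HP IHP HQ IHQ C Hd _ _] phi1 phi2 E.
  by rewrite /= !E // !inE eqxx ?orbT.
have [s _ Hs] := perm_case Hd.
rewrite !Hs; congr sc.
- by apply: IHP => a ha; apply: E; exact: mem_take ha.
- by apply: IHQ => a ha; apply: E; exact: mem_drop ha.
- rewrite /C !evalE_add; congr gmul; apply: Btree_ext => a ha; apply: E.
    exact: mem_take ha.
  exact: mem_drop ha.
Qed.

Lemma killB t U phi s : okf phi -> size U = 2 ^ t -> s \in U -> phi s = 0 ->
  evalE phi (Btree t U) = 0.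
Proof.
move=> ok; elim: t U => [|t IH] U hs hsU h0.
  by case: U hs hsU => [|a [|]] //= _; rewrite inE => /eqP <-.
have [h1 h2] := halves_size hs.
rewrite /=; case: (mem_halves t hsU) => h.
  by rewrite IH // gcomm0l ?evalE_lt.
by rewrite (IH (drop _ _)) // gcomm0r ?evalE_lt.
Qed.

Lemma uniq_halves n U : uniq U ->
  [/\ uniq (take n U), uniq (drop n U) & forall a, a \in drop n U -> a \notin take n U].
Proof.
rewrite -{1}(cat_take_drop n U) cat_uniq => /and3P [u1 /hasPn u2 u3]; split => //.
Qed.

Definition comb (L : seq T) (f g : T -> nat) := fun a => if a \in L then f a else g a.

Lemma nontrivA t U w : isW t U w -> uniq U -> forall k, k < size AL ->
  exists phi, [/\ okf phi, evalE phi w = aP k & evalE phi (Btree t U) = aX k].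
Proof.
elim=> [a b|{}t {}U P Q X Y Z HP IHP HQ IHQ C Hd _ _] uU k hk.
  have [wa [wb [ha hb e1 e2]]] := specAB hk.
  have ab : a != b by move: uU; rewrite /= inE andbT.
  exists (fun x => if x == a then wa else wb); split.
  - by move=> x; case: ifP.
  - by rewrite /= eqxx eq_sym (negbTE ab).
  - by rewrite /= eqxx eq_sym (negbTE ab).
have [s s6 Hs] := perm_case Hd.
have [uL uR dLR] := uniq_halves (2 ^ t.+1) uU.
have [k1 [k2 [hk1 hk2 e1 e2]]] := specA hk s6.
have [f [okf' ef1 ef2]] := IHP uL k1 hk1.
have [g [okg eg1 eg2]] := IHQ uR k2 hk2.
set L := take (2 ^ t.+1) U; set R := drop (2 ^ t.+1) U.
have EL : {in L, comb L f g =1 f} by move=> a ha; rewrite /comb ha.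
have ER : {in R, comb L f g =1 g} by move=> a ha; rewrite /comb (negbTE (dLR a ha)).
exists (comb L f g); split.
- by move=> a; rewrite /comb; case: ifP.
- rewrite Hs (isW_ext HP EL) (isW_ext HQ ER) /C !evalE_add (Btree_ext _ EL) (Btree_ext _ ER).
  by rewrite ef1 eg1 ef2 eg2.
- have -> : Btree t.+2 U = EComm (Btree t.+1 L) (Btree t.+1 R) by [].
  by rewrite evalE_comm (Btree_ext _ EL) (Btree_ext _ ER) ef2 eg2.
Qed.

Lemma nontrivK t U w : isW t U w -> uniq U -> forall s, s \in U -> forall k, k < size KL ->
  exists phi, [/\ okf phi, phi s = 0 & evalE phi w = kK k].
Proof.
elim=> [a b|{}t {}U P Q X Y Z HP IHP HQ IHQ C Hd _ _] uU s hsU k hk;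
  have [kl kn Kc] := specK hk.
  have ab : a != b by move: uU; rewrite /= inE andbT.
  exists (fun x => if x == s then 0 else kK k); split.
  - by move=> x; case: ifP.
  - by rewrite eqxx.
  have ba : b != a by rewrite eq_sym.
  move: hsU; rewrite !inE => /orP [] /eqP ->; rewrite /= eqxx.
    by rewrite (negbTE ba) gmul0l.
  by rewrite (negbTE ab) gmul0r.
have [s0 s6 Hs] := perm_case Hd.
have [uL uR dLR] := uniq_halves (2 ^ t.+1) uU.
have sL := isW_size HP; have sR := isW_size HQ.
have [[kk [ka [hkk hka eL]]] [ka' [kk' [hkk' hka' eR]]]] := Kc s0 s6.
set L := take (2 ^ t.+1) U; set R := drop (2 ^ t.+1) U.
case: (mem_halves t.+1 hsU) => hs.
  have [f [okf' fs ef]] := IHP uL s hs kk hkk.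
  have [g [okg eg1 eg2]] := nontrivA HQ uR hka.
  have EL : {in L, comb L f g =1 f} by move=> a ha; rewrite /comb ha.
  have ER : {in R, comb L f g =1 g} by move=> a ha; rewrite /comb (negbTE (dLR a ha)).
  have okc : okf (comb L f g) by move=> a; rewrite /comb; case: ifP.
  exists (comb L f g); split => //.
  - by rewrite /comb hs.
  - rewrite Hs (isW_ext HP EL) (isW_ext HQ ER) /C !evalE_add (Btree_ext _ ER) (killB (s:=s)) //.
      by rewrite ef eg1 eg2 gmul0l // -eg2 evalE_lt.
    by rewrite /comb hs.
have [f [okf' ef1 ef2]] := nontrivA HP uL hka'.
have [g [okg gs eg]] := IHQ uR s hs kk' hkk'.
have EL : {in L, comb L f g =1 f} by move=> a ha; rewrite /comb ha.
have ER : {in R, comb L f g =1 g} by move=> a ha; rewrite /comb (negbTE (dLR a ha)).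
have okc : okf (comb L f g) by move=> a; rewrite /comb; case: ifP.
exists (comb L f g); split => //.
- by rewrite /comb (negbTE (dLR s hs)).
- rewrite Hs (isW_ext HP EL) (isW_ext HQ ER) /C !evalE_add (Btree_ext _ EL) (killB (U:=R) (s:=s)) //.
    by rewrite ef1 eg ef2 gmul0r // -ef2 evalE_lt.
  by rewrite /comb (negbTE (dLR s hs)).
Qed.

End Main2.

Local Open Scope ring_scope.

Theorem theorem3 (T : eqType) (i : nat) (V : seq T) :
  (2 <= i)%N -> uniq V -> size V = (2 ^ i)%N ->
  (exists w, isW i V w) /\
  (forall w, isW i V w ->
     [/\ solves 2 V w,
         (flen w)%:R = 8%:R / 3%:R * 6%:R ^+ i - 4%:R * (size V)%:R ^+ 2 :> rat
       & (rlen w)%:R <= 8%:R / 3%:R * 6%:R ^+ i - 4%:R * (size V)%:R ^+ 2 :> rat]).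
Proof.
move=> hi uV sV; split.
  by case: i hi sV => [|j] // _ sV; exact: exists_W sV.
move=> w hw.
have Hf : (3 * flen w + 12 * 4 ^ i = 8 * 6 ^ i)%N.
  by case: (isW_flen hw) => [[e _]|[_ ->]] //; subst i.
have Ef : (flen w)%:R = 8%:R / 3%:R * 6%:R ^+ i - 4%:R * (size V)%:R ^+ 2 :> rat.
  have H := congr1 (fun n : nat => n%:R : rat) Hf; move: H => /=.
  rewrite natrD !natrM !natrX sV natrX -exprM mulnC exprM.
  have -> : (2%:R ^+ 2 : rat) = 4%:R by rewrite -natrX.
  set a := (6%:R ^+ i : rat); set b := (4%:R ^+ i : rat) => H.
  lra.
split => //.
- move=> S uS sub; split.
  + move=> hk; case: S uS sub hk => [|s [|s2 S]] //= uS sub hk.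
    * have /andP [hA hA0] := AL0.
      have [phi [okp e1 _]] := nontrivA hw uV hA.
      have := killed_eval okp hk.
      rewrite (@evalE_ext _ _ phi) ?e1; first by move/eqP; rewrite (negbTE hA0).
      by move=> a; rewrite /kill in_nil.
    * have hsV : s \in V by apply: sub; rewrite inE eqxx.
      have [_ hK0 _] := specK KL0.
      have [phi [okp ps e1]] := nontrivK hw uV hsV KL0.
      have := killed_eval okp hk.
      rewrite (@evalE_ext _ _ phi) ?e1; first by move/eqP; rewrite (negbTE hK0).
      by move=> a; rewrite /kill inE; case: eqP => // ->.
  + case: S uS sub => [|s1 [|s2 S]] // uS sub _.
    rewrite /killed; apply: triv_reduce.
    have ne : s1 != s2 by case/andP: uS; rewrite inE negb_or => /andP [].
    apply: (triv_W hw ne); try (by apply: sub; rewrite !inE eqxx ?orbT);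
      by rewrite !inE eqxx ?orbT.
- rewrite -Ef ler_nat /rlen -size_raw; exact: size_reduce.
Qed.
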